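(* Let $n\ge 4$ and let $\rho=(a^b)$ be a partition of $n$ with $a,b\ge 2$ and $ab=n$ (i.e. $b$ parts all equal to $a$). Then $\rho$ has exactly two neighbors in the partition graph $G_n$, namely \[ \alpha(\rho)=(a+1,a^{\,b-2},a-1)\quad\text{and}\quad \beta(\rho)=(a^{\,b-1},a-1,1), \] where $\alpha(\rho)=(a+1,a-1)$ when $b=2$.
   Context: The partition graph $G_n$ has as vertices the integer partitions of $n$; two partitions are adjacent if one is obtained from the other by a single elementary unit transfer followed by reordering: decrease one part by $1$ and either increase a different part by $1$ or create a new part equal to $1$, then delete a part that became $0$ and sort the parts in nonincreasing order (the result being a partition different from the original). Exponent notation $a^k$ denotes $k$ parts equal to $a$. *)

(* Defs.v *)
From mathcomp Require Import all_boot.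
Set Implicit Arguments. Unset Strict Implicit. Unset Printing Implicit Defensive.

Definition is_partition (n : nat) (p : seq nat) : Prop :=
  [/\ sorted geq p, all (fun x => 0 < x) p & sumn p = n].

Definition normalize (s : seq nat) : seq nat := sort geq (filter (fun x => x != 0) s).

Definition decr (p : seq nat) (i : nat) : seq nat := set_nth 0 p i (nth 0 p i).-1.
Definition incr (p : seq nat) (j : nat) : seq nat := set_nth 0 p j (nth 0 p j).+1.

Definition elem_move (p q : seq nat) : Prop :=
  q != p /\
  exists i, i < size p /\
    ((exists j, [/\ j < size p, j != i & q = normalize (incr (decr p i) j)])
     \/ q = normalize (rcons (decr p i) 1)).

Definition adjacent (n : nat) (p q : seq nat) : Prop :=
  [/\ is_partition n p, is_partition n q & (elem_move p q \/ elem_move q p)].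

(* Main.v *)
Require Import Defs.
From mathcomp Require Import all_boot.
From mathcomp Require Import zify.

Lemma geq_tr : transitive geq.
Proof. move=> y x z /= h1 h2; lia. Qed.

Lemma geq_as : antisymmetric geq.
Proof. move=> x y /andP[/= h1 h2]; lia. Qed.

Lemma geq_tot : total geq.
Proof. move=> x y /=; apply: leq_total. Qed.

Lemma cnt_set (P : pred nat) s i x : i < size s ->
  count P (set_nth 0 s i x) + P (nth 0 s i) = count P s + P x.
Proof.
elim: s i => [|y s IH] [|i] //= Hi; first lia.
have := IH i Hi; lia.
Qed.

Lemma cnt_id (P : pred nat) s i j : i < size s -> j < size s -> j != i ->
  count P (incr (decr s i) j) + P (nth 0 s i) + P (nth 0 s j)
  = count P s + P (nth 0 s i).-1 + P (nth 0 s j).+1.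
Proof.
move=> Hi Hj Hji; rewrite /incr /decr.
have H1 := @cnt_set P s i (nth 0 s i).-1 Hi.
have Hj' : j < size (set_nth 0 s i (nth 0 s i).-1) by rewrite size_set_nth; lia.
have H2 := @cnt_set P (set_nth 0 s i (nth 0 s i).-1) j (nth 0 (set_nth 0 s i (nth 0 s i).-1) j).+1 Hj'.
move: H2; rewrite nth_set_nth /= (negbTE Hji); lia.
Qed.

Lemma cnt_rc (P : pred nat) s i : i < size s ->
  count P (rcons (decr s i) 1) + P (nth 0 s i) = count P s + P (nth 0 s i).-1 + P 1.
Proof.
move=> Hi; rewrite -cats1 count_cat /decr /=.
have := @cnt_set P s i (nth 0 s i).-1 Hi; lia.
Qed.

Lemma sorted_nseq_cat k a s : sorted geq s -> all (fun x => x <= a) s ->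
  sorted geq (nseq k a ++ s).
Proof.
move=> Hs Ha; elim: k => //= k IH.
rewrite (path_sortedE geq_tr) IH andbT all_cat.
apply/andP; split; last exact: Ha.
by apply/allP => x; rewrite mem_nseq => /andP[_ /eqP ->] /=.
Qed.

Lemma norm_eq s r :
  (forall P, count (predI P (fun x => x != 0)) s = count P r) ->
  sorted geq r -> normalize s = r.
Proof.
move=> H Hr; apply: (sorted_eq geq_tr geq_as) => //.
  exact: (sort_sorted geq_tot).
by apply/permP => P; rewrite /normalize count_sort count_filter H.
Qed.

Theorem lemma3p1 (n a b : nat) :
  4 <= n -> 2 <= a -> 2 <= b -> a * b = n ->
  let rho := nseq b a in
  let alpha := a.+1 :: nseq (b - 2) a ++ [:: a.-1] in
  let beta := nseq (b - 1) a ++ [:: a.-1; 1] in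
  [/\ alpha <> beta, adjacent n rho alpha, adjacent n rho beta &
      forall q : seq nat, adjacent n rho q -> q = alpha \/ q = beta].
Proof.
case: a => [|[|a]] // Hn _; case: b => [|[|b]] // _ Hab.
move=> rho alpha beta; subst rho alpha beta n.
rewrite !subSS !subn0 /=.
set rho := a.+2 :: a.+2 :: nseq b a.+2.
set alpha := a.+3 :: nseq b a.+2 ++ [:: a.+1].
set beta := a.+2 :: nseq b a.+2 ++ [:: a.+1; 1].
have allle : forall k c, a.+2 <= c -> all (geq c) (nseq k a.+2).
  by move=> k c Hc; apply/allP => x; rewrite mem_nseq => /andP[_ /eqP ->].
have Salpha : sorted geq alpha.
  rewrite /alpha /= (path_sortedE geq_tr) all_cat allle //=.
  apply/andP; split; first lia.
  apply: sorted_nseq_cat => //=; lia.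
have Sbeta : sorted geq beta.
  have -> : beta = nseq b.+1 a.+2 ++ [:: a.+1; 1] by [].
  apply: sorted_nseq_cat => /=; lia.
have sumN : forall k, sumn (nseq k a.+2) = a.+2 * k by elim => /=[|k ->]; lia.
have rhoE : rho = nseq b.+2 a.+2 by [].
have Prho : is_partition (a.+2 * b.+2) rho.
  rewrite rhoE; split.
  - by rewrite -[nseq _ _]cats0; apply: sorted_nseq_cat.
  - by apply/allP => x; rewrite mem_nseq => /andP[_ /eqP ->].
  - by rewrite sumN.
have cN : forall (P : pred nat) k, count P (nseq k a.+2) = P a.+2 * k.
  by move=> P k; rewrite count_nseq.
have allN : all (fun x => 0 < x) (nseq b a.+2).
  by apply/allP => x; rewrite mem_nseq => /andP[_ /eqP ->].
have Palpha : is_partition (a.+2 * b.+2) alpha.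
  split=> //.
  - by rewrite /alpha /= all_cat allN.
  - rewrite /alpha /= sumn_cat sumN /=; lia.
have Pbeta : is_partition (a.+2 * b.+2) beta.
  split=> //.
  - by rewrite /beta /= all_cat allN.
  - rewrite /beta /= sumn_cat sumN /=; lia.
have nthrho : forall i, i < b.+2 -> nth 0 rho i = a.+2.
  by move=> i Hi; rewrite rhoE nth_nseq Hi.
split.
- rewrite /alpha /beta; case; lia.
- split=> //; left; split.
    by rewrite /alpha /rho; apply/eqP; case; lia.
  exists 0; split=> //; left; exists 1; split=> //.
  symmetry; apply: norm_eq => // P.
  rewrite /rho /incr /decr /= /alpha /= count_cat !cN /= !andbT; lia.
- split=> //; left; split.
    by apply/eqP => /(congr1 size); rewrite /beta /rho /= size_cat !size_nseq /=; lia.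
  exists 0; split=> //; right.
  symmetry; apply: norm_eq => // P.
  rewrite /rho /decr /= -cats1 count_cat /= /beta /= count_cat !cN /= !andbT; lia.
move=> q [_ [Sq Aq Sumq] [Hm|Hm]].
  case: Hm => _ [i [Hi [[j [Hj Hji ->]]| ->]]].
    left; apply: norm_eq => // P.
    have := @cnt_id (predI P (fun x => x != 0)) rho i j Hi Hj Hji.
    move: Hi Hj; rewrite rhoE size_nseq => Hi Hj.
    rewrite !nthrho // cN /alpha /= count_cat cN /= !andbT; lia.
  right; apply: norm_eq => // P.
  have := @cnt_rc (predI P (fun x => x != 0)) rho i Hi.
  move: Hi; rewrite rhoE size_nseq => Hi.
  rewrite !nthrho // cN /beta /= count_cat cN /= !andbT; lia.
case: Hm => _ [i [Hi [[j [Hj Hji Hr]]| Hr]]]; last first.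
  have := congr1 (count (pred1 1)) Hr.
  rewrite /normalize count_sort count_filter -cats1 count_cat rhoE cN /=; lia.
have HC : forall P, count (predI P (fun x => x != 0)) (incr (decr q i) j) = P a.+2 * b.+2.
  move=> P; rewrite -count_filter -(count_sort geq) -/(normalize _) -Hr rhoE cN //.
have Fq : filter (fun x => x != 0) q = q.
  by apply/all_filterP; move: Aq; apply: sub_all => x; rewrite lt0n.
have CQ : forall P, count (predI P (fun x => x != 0)) q = count P q.
  by move=> P; rewrite -count_filter Fq.
have posi : 0 < nth 0 q i by apply: (all_nthP 0 Aq).
have posj : 0 < nth 0 q j by apply: (all_nthP 0 Aq).
have Ntj : nth 0 (incr (decr q i) j) j = (nth 0 q j).+1.
  by rewrite /incr nth_set_nth /= eqxx /decr nth_set_nth /= (negbTE Hji).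
have Nti : nth 0 (incr (decr q i) j) i = (nth 0 q i).-1.
  by rewrite /incr nth_set_nth /= eq_sym (negbTE Hji) /decr nth_set_nth /= eqxx.
have Hsz : size (incr (decr q i) j) = size q.
  rewrite /incr /decr !size_set_nth; lia.
have inrho : forall k, k < size q -> nth 0 (incr (decr q i) j) k != 0 ->
    nth 0 (incr (decr q i) j) k = a.+2.
  move=> k Hk Hnz.
  have : nth 0 (incr (decr q i) j) k \in rho.
    rewrite Hr /normalize mem_sort mem_filter Hnz /= mem_nth // Hsz //.
  by rewrite rhoE mem_nseq => /andP[_ /eqP].
have Ej : nth 0 q j = a.+1.
  have := inrho j Hj; rewrite Ntj => H; have := H isT; lia.
have Ei : nth 0 q i = 1 \/ nth 0 q i = a.+3.
  have := inrho i Hi; rewrite Nti.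
  case: eqP => [E _ | _ H]; [left; lia | right; have := H isT; lia].
have CI := fun P => @cnt_id (predI P (fun x => x != 0)) q i j Hi Hj Hji.
case: Ei => Ei; [right | left]; apply: (sorted_eq geq_tr geq_as) => //;
  apply/permP => P; have := CI P; rewrite HC CQ Ei Ej /=.
- by rewrite /beta /= count_cat cN /= !andbT; lia.
- by rewrite /alpha /= count_cat cN /= !andbT; lia.
Qed.
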